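(* Let $X,Y$ be finite-dimensional Banach spaces over $\mathbb{K}\in\{\mathbb{R},\mathbb{C}\}$, let $G\in L(X,Y)$ with $\|G\|=1$, and let $T\in L(X,Y)$. Then (i) $S_G(T)=\{ y^*(Tx):x\in S_X,\ y^*\in S_{Y^*},\ \|Gx\|= 1 \}$; (ii) $V_G(T)=\{y^*(Tx):x\in S_X,\ y^*\in S_{Y^*},\ y^*(Gx)= 1 \}$.
   Context: $S_X$ denotes the unit sphere of $X$ and $Y^*$ the dual of $Y$. For $T\in L(X,Y)$: $S_G(T):=\bigcap_{\delta>0}\overline{\{y^*(Tx): x\in S_X,\ y^*\in S_{Y^*},\ \|Gx\|>1-\delta\}}$ and $V_G(T):=\bigcap_{\delta>0}\overline{\{y^*(Tx): x\in S_X,\ y^*\in S_{Y^*},\ \operatorname{Re} y^*(Gx)>1-\delta\}}$ (the numerical range of $T$ with respect to $G$). *)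

(* Defs.v *)
From HB Require Import structures.
From mathcomp Require Import all_boot all_order all_algebra.
From mathcomp Require Import all_classical all_reals topology normedtype.
From mathcomp Require Import complex.
Set Implicit Arguments. Unset Strict Implicit. Unset Printing Implicit Defensive.
Import Order.TTheory GRing.Theory Num.Theory.
Import numFieldNormedType.Exports.
Local Open Scope classical_set_scope.
Local Open Scope ring_scope.

Definition findim (K : numDomainType) (V : lmodType K) : Prop :=
  exists (n : nat) (e : 'I_n -> V),
    forall v : V, exists c : 'I_n -> K, v = \sum_(i < n) c i *: e i.

Definition unit_sphere (K : numDomainType) (V : normedModType K) : set V :=
  [set x | `|x| = 1].

Definition opnorm_eq1 (K : numFieldType) (U V : normedModType K) (f : U -> V) : Prop :=
  (forall x : U, `|x| <= 1 -> `|f x| <= 1) /\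
  (forall c : K, c < 1 -> exists x : U, `|x| <= 1 /\ c < `|f x|).

Definition dual_unit (K : numFieldType) (Y : normedModType K) (ys : {linear Y -> K^o}) : Prop :=
  (forall y : Y, `|y| <= 1 -> `|(ys y : K)| <= 1) /\
  (forall c : K, c < 1 -> exists y : Y, `|y| <= 1 /\ c < `|(ys y : K)|).

Section NumRanges.
Variables (K : numFieldType) (X Y : normedModType K).

Definition SG (G T : {linear X -> Y}) : set K :=
  \bigcap_(d in [set d : K | 0 < d])
    closure [set z : K | exists (x : X) (ys : {linear Y -> K^o}),
      `|x| = 1 /\ dual_unit ys /\ 1 - d < `|G x| /\ z = ys (T x)].

(* V_G(T); [re] is the real-part map of K (identity for K = R). *)
Definition VG (re : K -> K) (G T : {linear X -> Y}) : set K :=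
  \bigcap_(d in [set d : K | 0 < d])
    closure [set z : K | exists (x : X) (ys : {linear Y -> K^o}),
      `|x| = 1 /\ dual_unit ys /\ 1 - d < re (ys (G x)) /\ z = ys (T x)].
End NumRanges.

Definition prop2p4_stmt (K : numFieldType) (re : K -> K) : Prop :=
  forall (X Y : normedModType K), findim X -> findim Y ->
  forall (G T : {linear X -> Y}), opnorm_eq1 G ->
    SG G T = [set z : K | exists (x : X) (ys : {linear Y -> K^o}),
      `|x| = 1 /\ dual_unit ys /\ `|G x| = 1 /\ z = ys (T x)] /\
    VG re G T = [set z : K | exists (x : X) (ys : {linear Y -> K^o}),
      `|x| = 1 /\ dual_unit ys /\ ys (G x) = 1 /\ z = ys (T x)].

(* Main.v *)
Require Import Defs.
From HB Require Import structures.
From mathcomp Require Import all_boot all_order all_algebra.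
From mathcomp Require Import all_classical all_reals topology normedtype.
From mathcomp Require Import complex.
From mathcomp Require Import sequences.
From mathcomp Require Import ring lra.
Import Order.TTheory GRing.Theory Num.Theory.
Import numFieldNormedType.Exports.
Set Implicit Arguments.
Unset Printing Implicit Defensive.
Local Open Scope classical_set_scope.
Local Open Scope ring_scope.

Section Gen.
Variable K : numFieldType.

Definition incr (f : nat -> nat) := forall n, (f n < f n.+1)%N.

Lemma incr_ge {f} : incr f -> forall n, (n <= f n)%N.
Proof. move=> hf; elim=> [//|n IH]; exact: leq_ltn_trans IH (hf n). Qed.

Lemma incr_mono {f} : incr f -> forall m n, (m <= n)%N -> (f m <= f n)%N.
Proof.
move=> hf m n /subnK <-; elim: (n - m)%N => [//|k IH].
by rewrite addSn; apply: leq_trans IH (ltnW (hf _)).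
Qed.

Lemma incr_comp f g : incr f -> incr g -> incr (f \o g).
Proof.
move=> hf hg n /=; have h := incr_mono hf _ _ (hg n).
exact: leq_trans (hf _) h.
Qed.

Definition cv {V : normedZmodType K} (u : nat -> V) (l : V) :=
  forall e : K, 0 < e -> exists N, forall n, (N <= n)%N -> `|u n - l| < e.

Lemma small0 {V : normedZmodType K} (x : V) : (forall e : K, 0 < e -> `|x| < e) -> x = 0.
Proof.
move=> h; apply/normr0_eq0/eqP; rewrite eq_le normr_ge0 andbT.
by apply/ler_addgt0Pr => e e0; rewrite add0r ltW // h.
Qed.

Lemma cv_uniq {V : normedZmodType K} (u : nat -> V) a b : cv u a -> cv u b -> a = b.
Proof.
move=> ha hb; apply/eqP; rewrite -subr_eq0; apply/eqP/small0 => e e0.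
have e20 : 0 < e / 2 by rewrite divr_gt0.
have [N1 h1] := ha _ e20; have [N2 h2] := hb _ e20.
pose n := maxn N1 N2.
have := h1 n (leq_maxl _ _); have := h2 n (leq_maxr _ _).
move=> c2 c1.
rewrite (le_lt_trans (ler_distD (u n) a b)) //.
by rewrite (splitr e) ltrD // distrC.
Qed.

Lemma cv_cst {V : normedZmodType K} (a : V) : cv (fun=> a) a.
Proof. by move=> e e0; exists 0%N => n _; rewrite subrr normr0. Qed.

Lemma cv_sub {V : normedZmodType K} (u : nat -> V) a f : incr f -> cv u a -> cv (u \o f) a.
Proof.
move=> hf hu e e0; have [N hN] := hu e e0; exists N => n Nn /=.
by apply: hN; exact: leq_trans Nn (incr_ge hf n).
Qed.

Lemma cvD {V : normedZmodType K} (u v : nat -> V) a b :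
  cv u a -> cv v b -> cv (fun n => u n + v n) (a + b).
Proof.
move=> hu hv e e0.
have e20 : 0 < e / 2 by rewrite divr_gt0.
have [N1 h1] := hu _ e20; have [N2 h2] := hv _ e20.
exists (maxn N1 N2) => n; rewrite geq_max => /andP[n1 n2].
rewrite opprD addrACA.
rewrite (le_lt_trans (ler_normD _ _)) // (splitr e) ltrD //; first exact: h1.
exact: h2.
Qed.

Lemma cv_norm {V : normedZmodType K} (u : nat -> V) a :
  cv u a -> cv (fun n => `|u n|) `|a|.
Proof.
move=> hu e e0; have [N hN] := hu e e0; exists N => n Nn.
exact: le_lt_trans (ler_dist_dist _ _) (hN n Nn).
Qed.

Lemma cv_le {V : normedZmodType K} (u : nat -> V) a b :
  cv u a -> (forall n, `|u n| <= b) -> `|a| <= b.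
Proof.
move=> hu hb; apply/ler_addgt0Pr => e e0.
have [N hN] := hu e e0.
rewrite (le_trans (_ : _ <= `|u N| + `|u N - a|)) //.
  by rewrite {1}(_ : a = u N - (u N - a)) ?ler_normB // opprB addrC subrK.
by rewrite lerD // ltW // hN.
Qed.

Lemma cv_ge {V : normedZmodType K} (u : nat -> V) a b :
  cv u a -> (forall n, b <= `|u n|) -> b <= `|a|.
Proof.
move=> hu hb; apply/ler_addgt0Pr => e e0.
have [N hN] := hu e e0.
rewrite (le_trans (hb N)) // (le_trans (_ : _ <= `|a| + `|u N - a|)) //.
  by rewrite {1}(_ : u N = a + (u N - a)) ?ler_normD // addrC subrK.
by rewrite lerD // ltW // hN.
Qed.


Lemma cv_ext {V : normedZmodType K} (u v : nat -> V) l :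
  (forall n, u n = v n) -> cv u l -> cv v l.
Proof. by move=> h hu e e0; have [N hN] := hu e e0; exists N => n /hN; rewrite h. Qed.

Lemma cv_approx {V : normedZmodType K} (u v : nat -> V) l :
  cv u l -> cv (fun n => v n - u n) 0 -> cv v l.
Proof.
move=> hu hd; have := cvD hu hd; rewrite addr0; apply: cv_ext => n.
by rewrite addrC subrK.
Qed.

Lemma cv_dom {V W : normedZmodType K} (u : nat -> V) l (v : nat -> W) C :
  cv u l -> 0 <= C -> (forall n, `|v n| <= C * `|u n - l|) -> cv v 0.
Proof.
move=> hu C0 hv e e0.
have C10 : 0 < C + 1 by rewrite ltr_wpDl.
have [N hN] := hu (e / (C + 1)) (divr_gt0 e0 C10).
exists N => n Nn; rewrite subr0 (le_lt_trans (hv n)) //.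
rewrite (le_lt_trans (ler_wpM2l C0 (ltW (hN n Nn)))) //.
rewrite mulrA ltr_pdivrMr // mulrC ltr_pM2l //.
by rewrite ltrDl ltr01.
Qed.

Lemma cvZ {V : normedModType K} (c : nat -> K) a (x : V) :
  cv c a -> cv (fun n => c n *: x) (a *: x).
Proof.
move=> hc; apply: cv_approx ((cv_cst (a *: x))) _.
apply: (cv_dom _ (`|x|) hc) => //= n.
by rewrite -scalerBl normrZ mulrC.
Qed.

Lemma cvM (c : nat -> K) a (x : K) :
  cv c a -> cv (fun n => c n * x) (a * x).
Proof.
move=> hc; apply: cv_approx ((cv_cst (a * x))) _.
apply: (cv_dom _ (`|x|) hc) => //= n.
by rewrite -mulrBl normrM mulrC.
Qed.

Lemma cv_sum {V : normedZmodType K} n (f : nat -> nat -> V) (a : nat -> V) :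
  (forall i, (i < n)%N -> cv (f i) (a i)) ->
  cv (fun k => \sum_(i < n) f i k) (\sum_(i < n) a i).
Proof.
elim: n => [|n IH] h.
  by rewrite big_ord0; apply: cv_ext (cv_cst 0) => k; rewrite big_ord0.
rewrite big_ord_recr /=.
apply: cv_ext (cvD (IH (fun i hi => h i (ltnW hi))) (h n (ltnSn n))) => k.
by rewrite big_ord_recr.
Qed.

Definition BWprop := forall (u : nat -> K) (M : K), (forall n, `|u n| <= M) ->
  exists phi, incr phi /\ exists l, cv (u \o phi) l.

Definition ARCH := forall e : K, 0 < e -> exists N : nat, (N.+1%:R)^-1 < e.

Lemma inv_small : ARCH -> forall e : K, 0 < e -> exists N, forall n, (N <= n)%N -> (n.+1%:R)^-1 < e.
Proof.
move=> ha e e0; have [N hN] := ha e e0; exists N => n Nn.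
rewrite (le_lt_trans _ hN) // lef_pV2 ?posrE ?ltr0Sn // ler_nat.
by rewrite ltnS.
Qed.

Lemma extract (hBW : BWprop) m (f : nat -> nat -> K) (M : nat -> K) :
  (forall i k, (i < m)%N -> `|f i k| <= M i) ->
  exists phi, incr phi /\ exists a : nat -> K,
    forall i, (i < m)%N -> cv (fun k => f i (phi k)) (a i).
Proof.
elim: m => [|m IH] hb.
  by exists id; split => [n|]; [exact: ltnSn | exists (fun=> 0)].
have [phi [iphi [a ha]]] := IH (fun i k hi => hb i k (ltnW hi)).
have [psi [ipsi [l hl]]] := hBW (fun k => f m (phi k)) (M m) (fun k => hb m _ (ltnSn m)).
exists (phi \o psi); split; first exact: incr_comp.
exists (fun i => if i == m then l else a i) => i; rewrite ltnS leq_eqVlt.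
case: eqP => [-> _ //|_ /= him].
exact: (cv_sub (f := psi) ipsi (ha i him)).
Qed.


Section Span.
Variable V : normedModType K.
Hypothesis hBW : BWprop.
Hypothesis hA : ARCH.

Definition span n (e : nat -> V) (x : V) := exists c : nat -> K, x = \sum_(i < n) c i *: e i.

Definition coefbound n (e : nat -> V) (C : K) := forall x, span n e x ->
  exists c : nat -> K, x = \sum_(i < n) c i *: e i /\ forall i, (i < n)%N -> `|c i| <= C * `|x|.

Lemma compA n e C : 0 <= C -> coefbound n e C ->
  forall (u : nat -> V) M, (forall k, span n e (u k)) -> (forall k, `|u k| <= M) ->
  exists phi, incr phi /\ exists x, span n e x /\ cv (u \o phi) x.
Proof.
move=> C0 hB u M hu hM.
have /choice [cf hcf] : forall k, exists c : nat -> K, u k = \sum_(i < n) c i *: e i /\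
    forall i, (i < n)%N -> `|c i| <= C * `|u k| by move=> k; exact: hB.
have [phi [iphi [a ha]]] := @extract hBW n (fun i k => cf k i) (fun=> C * M)
   (fun i k hi => le_trans ((hcf k).2 i hi) (ler_wpM2l C0 (hM k))).
exists phi; split => //; exists (\sum_(i < n) a i *: e i); split; first by exists a.
apply: cv_ext (@cv_sum V n (fun i k => cf (phi k) i *: e i) (fun i => a i *: e i) _) => [k /=|i hi].
  by rewrite (hcf (phi k)).1.
exact: cvZ (ha i hi).
Qed.


Lemma coefB n e : exists C, 0 <= C /\ coefbound n e C.
Proof.
elim: n => [|n [C' [C'0 IH]]].
  by exists 0; split => // x [c ->]; exists c; split => // i; rewrite ltn0.
set v := e n.
have [[d hd]|nW] := pselect (span n e v).
  exists C'; split => // x [c ->].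
  have sx : span n e (\sum_(i < n.+1) c i *: e i).
    exists (fun i => c i + c n * d i); rewrite big_ord_recr /= -/v hd scaler_sumr -big_split /=.
    by apply: eq_bigr => i _; rewrite scalerA scalerDl.
  have [c' [hx hc']] := IH _ sx.
  exists (fun i => if (i < n)%N then c' i else 0); split.
    rewrite {1}hx big_ord_recr /= ltnn scale0r addr0.
    by apply: eq_bigr => i _; rewrite ltn_ord.
  move=> i; rewrite ltnS leq_eqVlt => /orP[/eqP ->|hi].
    by rewrite ltnn normr0 mulr_ge0.
  by rewrite hi; apply: hc'.
have [δ [δ0 hδ]] : exists δ, 0 < δ /\ forall w, span n e w -> δ <= `|v - w|.
  apply: contrapT => H.
  have H' : forall k : nat, exists w, span n e w /\ `|v - w| < (k.+1%:R)^-1.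
    move=> k; apply: contrapT => nE; apply: H; exists (k.+1%:R)^-1.
    split; first by rewrite invr_gt0 ltr0Sn.
    move=> w sw; rewrite real_leNgt; last exact: normr_real.
      2: by rewrite gtr0_real // invr_gt0 ltr0Sn.
    by apply/negP => lt; apply: nE; exists w.
  have [w hw] := choice H'.
  have [|phi [iphi [w0 [sw0 cw0]]]] := compA C'0 IH w (`|v| + 1) (fun k => (hw k).1).
    move=> k; rewrite {1}(_ : w k = v - (v - w k)); last by rewrite opprB addrC subrK.
    rewrite (le_trans (ler_normB _ _)) // lerD2l ltW // (lt_le_trans (hw k).2) //.
    by rewrite invf_le1 ?ltr0Sn // ler1n.
  have cwv : cv w v.
    move=> eps eps0; have [N hN] := inv_small hA _ eps0; exists N => k Nk.
    by rewrite distrC; exact: lt_trans (hw k).2 (hN k Nk).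
  by apply: nW; rewrite -(cv_uniq cw0 (cv_sub iphi cwv)).
exists (C' * (1 + `|v| / δ) + δ^-1); split.
  apply: addr_ge0; last by rewrite invr_ge0 ltW.
  by apply: mulr_ge0 => //; apply: addr_ge0 => //; apply: divr_ge0 => //; exact: ltW.
move=> x [c ->]; rewrite big_ord_recr /= -/v.
set w := \sum_(i < n) c i *: e i.
have sw : span n e w by exists c.
have hcn : `|c n| * δ <= `|w + c n *: v|.
  have [cn0|cn0] := eqVneq (c n) 0; first by rewrite cn0 normr0 mul0r normr_ge0.
  have -> : w + c n *: v = c n *: (v - (- (c n)^-1 *: w)).
    by rewrite scaleNr opprK scalerDr scalerA mulfV // scale1r addrC.
  rewrite normrZ ler_wpM2l // hδ //.
  exists (fun i => - (c n)^-1 * c i); rewrite /w scaler_sumr; apply: eq_bigr => i _.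
  by rewrite scalerA.
have hcn' : `|c n| <= δ^-1 * `|w + c n *: v|.
  by rewrite -(ler_pM2l δ0) mulrA mulfV ?gt_eqF // mul1r mulrC.
have hw : `|w| <= `|w + c n *: v| * (1 + `|v| / δ).
  rewrite {1}(_ : w = (w + c n *: v) - c n *: v); last by rewrite addrK.
  rewrite (le_trans (ler_normB _ _)) // normrZ mulrDr mulr1 lerD2l.
  apply: le_trans (ler_wpM2r (normr_ge0 v) hcn') _.
  by rewrite le_eqVlt; apply/orP; left; apply/eqP; ring.
have [c' [hw' hc']] := IH w sw.
exists (fun i => if (i < n)%N then c' i else c n); split.
  rewrite big_ord_recr /= ltnn {1}hw'; congr (_ + _).
  by apply: eq_bigr => i _; rewrite ltn_ord.
move=> i; rewrite ltnS leq_eqVlt => /orP[/eqP ->|hi].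
  rewrite ltnn (le_trans hcn') // ler_wpM2r // lerDr mulr_ge0 //.
  by apply: addr_ge0 => //; apply: divr_ge0 => //; exact: ltW.
rewrite hi (le_trans (hc' i hi)) // (le_trans (ler_wpM2l C'0 hw)) //.
set q := 1 + _.
rewrite (_ : C' * (`|w + c n *: v| * q) = (C' * q) * `|w + c n *: v|); last by ring.
by rewrite ler_wpM2r // lerDl invr_ge0 ltW.
Qed.

End Span.

Arguments span {V}.
Arguments coefbound {V}.

Section Lin.
Variables (Y : lmodType K) (g : Y -> K^o) (H : linear g).
Definition wrapl of linear g := g.
HB.instance Definition _ := GRing.isLinear.Build K Y K^o *:%R (wrapl H) H.
Definition wrapL : {linear Y -> K^o} := wrapl H.
Lemma wrapLE y : wrapL y = g y. Proof. by []. Qed.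
End Lin.

Lemma closure_ex (A : set K) z : closure A z -> forall e : K, 0 < e ->
  exists a, A a /\ `|z - a| < e.
Proof.
move=> hz e e0; have [a [Aa ba]] := hz _ (nbhsx_ballx z e e0).
by exists a; split => //; move: ba; rewrite -ball_normE.
Qed.

Section Main.
Hypothesis hBW : BWprop.
Hypothesis hA : ARCH.

Lemma findim_span (V : normedModType K) : findim V -> exists n (e : nat -> V), forall x, span n e x.
Proof.
move=> [n [e he]].
exists n, (fun i => if (insub i : option 'I_n) is Some j then e j else 0) => x.
have [c hc] := he x.
exists (fun i => if (insub i : option 'I_n) is Some j then c j else 0).
by rewrite hc; apply: eq_bigr => j _; rewrite valK.
Qed.

Lemma findim_bounded (U W : normedModType K) (f : {linear U -> W}) : findim U ->
  exists C, 0 <= C /\ forall x, `|f x| <= C * `|x|.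
Proof.
move=> /findim_span [n [e hs]].
have [C [C0 hB]] := coefB _ hBW hA n e.
exists (C * \sum_(i < n) `|f (e i)|); split.
  by apply: mulr_ge0 => //; apply: sumr_ge0 => i _.
move=> x; have [c [hx hc]] := hB x (hs x).
rewrite {1}hx linear_sum (le_trans (ler_norm_sum _ _ _)) //.
rewrite (mulrC C) -mulrA mulr_suml; apply: ler_sum => i _.
by rewrite linearZ normrZ /= mulrC ler_wpM2l // hc.
Qed.

Lemma unit_bound (U W : normedModType K) (f : {linear U -> W}) :
  (forall x, `|x| <= 1 -> `|f x| <= 1) -> forall x, `|f x| <= `|x|.
Proof.
move=> hf x; have [->|x0] := eqVneq x 0; first by rewrite linear0 normr0.
have nx0 : 0 < `|x| by rewrite normr_gt0.
have := hf (`|x|^-1 *: x); rewrite linearZ !normrZ ger0_norm ?invr_ge0 ?normr_ge0 //.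
rewrite mulVf ?gt_eqF // lexx => /(_ isT).
by rewrite -(ler_pM2l nx0) mulrA mulfV ?gt_eqF // mul1r mulr1.
Qed.


Lemma dual_limit (Y : normedModType K) n (e : nat -> Y) :
  (forall y, span n e y) ->
  forall ys : nat -> {linear Y -> K^o}, (forall k y, `|ys k y| <= `|y|) ->
  exists phi, incr phi /\ exists g : {linear Y -> K^o},
    forall y, cv (fun k => ys (phi k) y) (g y).
Proof.
move=> hs ys hb.
have [phi [iphi [a ha]]] := @extract hBW n (fun i k => ys k (e i)) (fun i => `|e i|)
  (fun i k _ => hb k (e i)).
have [cf hcf] := choice hs.
pose g0 (y : Y) : K^o := \sum_(i < n) a i * cf y i.
have hcv : forall y, cv (fun k => ys (phi k) y) (g0 y).
  move=> y; apply: cv_ext (@cv_sum _ n (fun i k => ys (phi k) (e i) * cf y i) (fun i => a i * cf y i) _) => [k /=|i hi].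
    rewrite [in RHS](hcf y) linear_sum; apply: eq_bigr => i _.
    by rewrite linearZ /= mulrC.
  exact: cvM (ha i hi).
have lin : linear g0.
  move=> c u v.
  have h2 : cv (fun k => ys (phi k) (c *: u + v)) (g0 u * c + g0 v).
    apply: cv_ext (cvD (cvM c (hcv u)) (hcv v)) => k /=.
    by rewrite linearP /= mulrC.
  by rewrite (cv_uniq (hcv _) h2) mulrC.
exists phi; split => //; exists (wrapL lin) => y; exact: hcv.
Qed.


Lemma dual_lim_unit (Y : normedModType K) n (e : nat -> Y) :
  (forall y, span n e y) ->
  forall (ys : nat -> {linear Y -> K^o}) (g : {linear Y -> K^o}),
  (forall k, dual_unit (ys k)) -> (forall y, cv (fun k => ys k y) (g y)) ->
  dual_unit g.
Proof.
move=> hs ys g hu hg; split.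
  by move=> y hy; apply: (cv_le 1 (hg y)) => k; exact: (hu k).1.
move=> c c1; set m := (c + 1) / 2.
have [cm m1] := midf_lt c1.
have /choice [yk hyk] : forall k, exists y : Y, `|y| <= 1 /\ m < `|(ys k y : K)|.
  by move=> k; exact: (hu k).2.
have [C [C0 hB]] := coefB _ hBW hA n e.
have [psi [ipsi [y [_ cy]]]] := compA hBW C0 hB yk 1 (fun k => hs _) (fun k => (hyk k).1).
exists y; split; first by apply: (cv_le 1 cy) => k; exact: (hyk _).1.
apply: lt_le_trans cm _.
have h : cv (fun k => ys (psi k) (yk (psi k))) (g y).
  apply: cv_approx (cv_sub ipsi (hg y)) _.
  apply: (cv_dom _ 1 cy) => // k /=.
  rewrite -linearB mul1r /=; exact: (unit_bound _ (hu _).1).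
by apply: (cv_ge m h) => k; apply: ltW; exact: (hyk _).2.
Qed.


Lemma cvd (t : nat -> K) l phi : incr phi ->
  (forall k, `|t k - l| < (k.+1%:R)^-1) -> cv (t \o phi) l.
Proof.
move=> iphi ht eps eps0; have [N hN] := inv_small hA _ eps0; exists N => k Nk /=.
exact: lt_trans (ht _) (hN _ (leq_trans Nk (incr_ge iphi k))).
Qed.

Theorem main_gen (re : K -> K)
  (R1 : forall a b, `|re a - re b| <= `|a - b|)
  (R2 : forall w, `|w| <= 1 -> 1 <= re w -> w = 1)
  (R3 : forall a, re a \is Num.real) (R4 : re 1 = 1) : prop2p4_stmt re.
Proof.
move=> X Y fX fY G T hG.
have [nX [eX hsX]] := findim_span fX.
have [nY [eY hsY]] := findim_span fY.
have [CX [CX0 hBX]] := coefB _ hBW hA nX eX.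
have Gb : forall x, `|G x| <= `|x| := unit_bound G hG.1.
have [CT [CT0 hT]] := findim_bounded T fX.
have core : forall (xs : nat -> X) (yss : nat -> {linear Y -> K^o}),
   (forall k, `|xs k| = 1) -> (forall k, dual_unit (yss k)) ->
   exists phi, incr phi /\ exists x (g : {linear Y -> K^o}), `|x| = 1 /\ dual_unit g /\
     cv (xs \o phi) x /\ forall y, cv (fun k => yss (phi k) y) (g y).
  move=> xs yss hx hy.
  have [phi1 [i1 [x [_ cx]]]] := compA hBW CX0 hBX xs 1 (fun k => hsX _)
     (fun k => ltac:(by rewrite hx)).
  have [phi2 [i2 [g hg]]] := dual_limit hsY (fun k => yss (phi1 k))
     (fun k y => unit_bound _ (hy _).1 y).
  exists (phi1 \o phi2); split; first exact: incr_comp.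
  exists x, g; split.
    apply: (cv_uniq (cv_norm cx)); apply: cv_ext (cv_cst 1) => k.
    by rewrite /= hx.
  split; first by apply: (dual_lim_unit hsY (fun k => yss (phi1 (phi2 k))) g _ hg) => k; exact: hy.
  by split; [exact: (cv_sub i2 cx) | exact: hg].
have limF : forall (F : {linear X -> Y}) CF, 0 <= CF -> (forall x, `|F x| <= CF * `|x|) ->
   forall (xs : nat -> X) (yss : nat -> {linear Y -> K^o}) x (g : {linear Y -> K^o}),
   (forall k, dual_unit (yss k)) -> cv xs x -> (forall y, cv (fun k => yss k y) (g y)) ->
   cv (fun k => yss k (F (xs k))) (g (F x)).
  move=> F CF CF0 hF xs yss x g hy cx hg.
  apply: cv_approx (hg (F x)) _.
  apply: (cv_dom _ CF cx) => // k /=.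
  rewrite -linearB /= -linearB /=.
  exact: le_trans (unit_bound _ (hy k).1 _) (hF _).
have Gb' : forall x, `|G x| <= 1 * `|x| by move=> x; rewrite mul1r.
split.
  apply/seteqP; split => z.
    move=> hz.
    have hk : forall k : nat, exists p : X * {linear Y -> K^o}, `|p.1| = 1 /\ dual_unit p.2 /\
        1 - (k.+1%:R)^-1 < `|G p.1| /\ `|p.2 (T p.1) - z| < (k.+1%:R)^-1.
      move=> k; have d0 : 0 < (k.+1%:R)^-1 :> K by rewrite invr_gt0 ltr0Sn.
      have [a [[x [ys [hx [hys [hGx ->]]]]] hza]] := closure_ex (hz _ d0) _ d0.
      by exists (x, ys); rewrite distrC.
    have [pf hpf] := choice hk.
    have [phi [iphi [x [g [hx [hg [cx cg]]]]]]] := core (fun k => (pf k).1) (fun k => (pf k).2)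
      (fun k => (hpf k).1) (fun k => (hpf k).2.1).
    exists x, g; split => //; split => //; split.
      have cG : cv (fun k => `|G ((pf (phi k)).1)|) `|G x|.
        apply: cv_norm; apply: cv_approx (cv_cst (G x)) _.
        by apply: (cv_dom _ 1 cx) => // k /=; rewrite -linearB mul1r Gb.
      apply: (cv_uniq cG); apply: (cvd (fun k => `|G (pf k).1|)) => // k.
      have h1 := (hpf k).2.2.1.
      have h2 : `|G (pf k).1| <= 1 by rewrite (le_trans (Gb _)) // (hpf k).1.
      by rewrite distrC ger0_norm ?subr_ge0 // ltrBlDl; rewrite ltrBlDr in h1.
    apply: (cv_uniq _ (limF T CT CT0 hT _ (fun k => (pf (phi k)).2) _ _
       (fun k => (hpf (phi k)).2.1) cx cg)).
    apply: (cvd (fun k => (pf k).2 (T (pf k).1))) => // k; exact: (hpf k).2.2.2.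
  move=> [x [ys [hx [hys [hGx ->]]]]] d d0; apply: subset_closure.
  exists x, ys; split => //; split => //; split => //.
  by rewrite hGx ltrBlDr ltrDl.
apply/seteqP; split => z.
  move=> hz.
  have hk : forall k : nat, exists p : X * {linear Y -> K^o}, `|p.1| = 1 /\ dual_unit p.2 /\
      1 - (k.+1%:R)^-1 < re (p.2 (G p.1)) /\ `|p.2 (T p.1) - z| < (k.+1%:R)^-1.
    move=> k; have d0 : 0 < (k.+1%:R)^-1 :> K by rewrite invr_gt0 ltr0Sn.
    have [a [[x [ys [hx [hys [hGx ->]]]]] hza]] := closure_ex (hz _ d0) _ d0.
    by exists (x, ys); rewrite distrC.
  have [pf hpf] := choice hk.
  have [phi [iphi [x [g [hx [hg [cx cg]]]]]]] := core (fun k => (pf k).1) (fun k => (pf k).2)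
    (fun k => (hpf k).1) (fun k => (hpf k).2.1).
  exists x, g; split => //; split => //; split.
    have cw := limF G 1 ler01 Gb' _ (fun k => (pf (phi k)).2) _ _
       (fun k => (hpf (phi k)).2.1) cx cg.
    set w := g (G x) in cw *.
    have hw1 : `|w| <= 1.
      by rewrite (le_trans (unit_bound _ hg.1 _)) // (le_trans (Gb x)) // hx.
    apply: R2 => //.
    apply/ler_addgt0Pr => eps eps0.
    have e2 : 0 < eps / 2 by rewrite divr_gt0.
    have [N1 h1] := cw _ e2.
    have [N2 h2] := inv_small hA _ e2.
    pose k := maxn N1 N2; pose j := phi k.
    set u := (pf j).2 (G (pf j).1).
    have a1 : 1 < re u + (j.+1%:R)^-1 by rewrite -ltrBlDr; exact: (hpf j).2.2.1.
    have a2 : (j.+1%:R)^-1 < eps / 2.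
      by apply: h2; exact: leq_trans (leq_maxr _ _) (incr_ge iphi k).
    have a3 : `|u - w| < eps / 2 by apply: h1; exact: leq_maxl.
    have a4 : re u <= re w + `|u - w|.
      rewrite -lerBlDl (le_trans (real_ler_norm _) (R1 _ _)) //.
      by rewrite rpredB.
    apply: ltW; apply: lt_le_trans a1 _.
    rewrite (splitr eps) addrA; apply: lerD (ltW a2).
    by apply: le_trans a4 _; rewrite lerD2l ltW.
  apply: (cv_uniq _ (limF T CT CT0 hT _ (fun k => (pf (phi k)).2) _ _
     (fun k => (hpf (phi k)).2.1) cx cg)).
  apply: (cvd (fun k => (pf k).2 (T (pf k).1))) => // k; exact: (hpf k).2.2.2.
move=> [x [ys [hx [hys [hGx ->]]]]] d d0; apply: subset_closure.
exists x, ys; split => //; split => //; split => //.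
by rewrite hGx R4 ltrBlDr ltrDl.
Qed.

End Main.
End Gen.

Unset Implicit Arguments.

Section T.
Variable R : realType.
Lemma BWR : BWprop R.
Proof.
move=> u M hM.
have bu : bounded_fun u.
  exists M; split; first exact: ger0_real (le_trans (normr_ge0 _) (hM 0%N)).
  by move=> N MN x _; exact: le_trans (hM x) (ltW MN).
have [f incf cf] := bolzano_weierstrass bu.
exists f; split.
  by move=> n; rewrite ltnNge -[(f n.+1 <= f n)%N]/(f n.+1 <= f n)%O incf ltnn.
exists (lim ((u \o f) @ \oo)) => e e0.
have /cvgrPdist_lt h := cf.
have [N _ hN] := h e e0.
by exists N => n /hN; rewrite distrC.
Qed.
Lemma ARCHR : ARCH R.
Proof.
move=> e e0; exists (Num.bound (e^-1)).
set N := Num.bound _.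
rewrite -[e in _ < e]invrK ltf_pV2 ?posrE ?invr_gt0 ?ltr0Sn //.
apply: lt_trans (archi_boundP _) _; first by rewrite invr_ge0 ltW.
by rewrite ltr_nat.
Qed.

Local Open Scope complex_scope.

Lemma normc_le (z : R[i]) : `|z| <= (`|complex.Re z| + `|complex.Im z|)%:C.
Proof.
rewrite normc_def lecR.
set a := complex.Re z; set b := complex.Im z.
rewrite -[X in _ <= X](ger0_norm (addr_ge0 (normr_ge0 a) (normr_ge0 b))) -sqrtr_sqr.
rewrite ler_sqrt ?sqr_ge0 //.
rewrite -(real_normK (num_real a)) -(real_normK (num_real b)).
have := mulr_ge0 (normr_ge0 a) (normr_ge0 b); nra.
Qed.

Lemma normci : `|'i%C : R[i]| = 1.
Proof. by rewrite normc_def /= expr0n add0r expr1n sqrtr1. Qed.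

Lemma Re_pos (e : R[i]) : 0 < e -> 0 < complex.Re e.
Proof. by move=> e0; rewrite -ltcR (RRe_real (gtr0_real e0)). Qed.

Lemma ReB (x : R[i]) a b : complex.Re (x - a +i* b) = complex.Re x - a.
Proof. by case: x => ? ?; simpc. Qed.
Lemma ImB (x : R[i]) a b : complex.Im (x - a +i* b) = complex.Im x - b.
Proof. by case: x => ? ?; simpc. Qed.

Lemma BWC : BWprop R[i].
Proof.
move=> u M hM.
have M0 : 0 <= M := le_trans (normr_ge0 _) (hM 0%N).
have hRe : forall n, `|complex.Re (u n)| <= complex.Re M.
  by move=> n; rewrite -lecR (RRe_real (ger0_real M0)) (le_trans (normc_ge_Re _) (hM n)).
have hIm : forall x : R[i], `|complex.Im x|%:C <= `|x|.
  move=> x; have := normc_ge_Re (x * 'i%C).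
  by rewrite ReiNIm normrN normrM normci mulr1.
have hIm' : forall n, `|complex.Im (u n)| <= complex.Re M.
  by move=> n; rewrite -lecR (RRe_real (ger0_real M0)) (le_trans (hIm _) (hM n)).
have [phi1 [i1 [la ha]]] := BWR (fun n => complex.Re (u n)) _ hRe.
have [phi2 [i2 [lb hb]]] := BWR (fun n => complex.Im (u (phi1 n))) _ (fun n => hIm' _).
exists (phi1 \o phi2); split; first exact: incr_comp.
exists (la +i* lb) => e e0.
have e2 : 0 < complex.Re e / 2 by rewrite divr_gt0 // Re_pos.
have [N1 h1] := cv_sub i2 ha _ e2.
have [N2 h2] := hb _ e2.
exists (maxn N1 N2) => n; rewrite geq_max => /andP [n1 n2].
rewrite (le_lt_trans (normc_le _)) // -(RRe_real (gtr0_real e0)) ltcR.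
rewrite ReB ImB (splitr (complex.Re e)) ltrD //; [exact: h1 | exact: h2].
Qed.

Lemma ARCHC : ARCH R[i].
Proof.
move=> e e0; have [N hN] := ARCHR _ (Re_pos e e0); exists N.
rewrite -(RRe_real (gtr0_real e0)) -(rmorph_nat (real_complex R)) -fmorphV ltcR.
exact: hN.
Qed.

End T.
Local Close Scope complex_scope.

Theorem proposition2p4 (R : realType) :
  prop2p4_stmt (fun x : R => x) /\ prop2p4_stmt (fun z : R[i] => 'Re z).
Proof.
split.
  apply: (main_gen (BWR R) (ARCHR R)) => //.
  move=> w w1 hw; apply/le_anti; rewrite hw andbT.
    exact: le_trans (real_ler_norm (num_real w)) w1.
  by move=> a; exact: num_real.
have R1 : forall a b : R[i], `|'Re a - 'Re b| <= `|a - b|.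
  move=> a b; rewrite (_ : 'Re a - 'Re b = 'Re (a - b)); last by rewrite raddfB.
  exact: (leif_normC_Re_Creal (a - b)).1.
have R2 : forall w : R[i], `|w| <= 1 -> 1 <= 'Re w -> w = 1.
  move=> w w1 hw; have h := leif_Re_Creal w.
  have eq1 : 'Re w = `|w| by apply/le_anti; rewrite h.1 (le_trans w1 hw).
  have w0 : 0 <= w by rewrite -h.2 eq1 eqxx.
  have /Creal_ReP hr := ger0_real w0.
  rewrite -hr; apply/le_anti; rewrite hw andbT eq1 //.
have R3 : forall a : R[i], 'Re a \is Num.real by move=> a; exact: Creal_Re.
have R4 : 'Re (1 : R[i]) = 1 by apply/Creal_ReP; exact: rpred1.
exact: (main_gen (BWC R) (ARCHC R) (fun z => 'Re z) R1 R2 R3 R4).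
Qed.
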